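(* Let $E=(\mathcal{X},\mathcal{Y},\mathcal{Z},f,g)$ be an information-lossless finite-state encoder with $s$ states, and let $K$ be its Kraft matrix. Then the spectral radius of $K$ satisfies $\rho(K)\le 1$. Consequently, for every positive integer $\ell$, the matrix $K^\ell$, whose $(z,z')$ entry equals $\sum_{\{x^\ell\in\mathcal{X}^\ell:\ g(z,x^\ell)=z'\}}2^{-L[f(z,x^\ell)]}$, also satisfies $\rho(K^\ell)\le 1$.
   Context: A finite-state (FS) encoder is a quintuple $E=(\mathcal{X},\mathcal{Y},\mathcal{Z},f,g)$, where $\mathcal{X}$ is a finite source alphabet of size $\alpha$, $\mathcal{Y}$ is a finite set of binary strings (possibly containing the empty string, of length $0$), $\mathcal{Z}$ is a finite set of $s$ states, $f:\mathcal{Z}\times\mathcal{X}\to\mathcal{Y}$ is the output function and $g:\mathcal{Z}\times\mathcal{X}\to\mathcal{Z}$ is the next-state function. For $z\in\mathcal{Z}$ and $x^n=(x_1,\dots,x_n)\in\mathcal{X}^n$, set $z_1=z$, $z_{i+1}=g(z_i,x_i)$; write $g(z,x^n)=z_{n+1}$ and let $f(z,x^n)$ denote the binary string obtained by concatenating $f(z_1,x_1),\dots,f(z_n,x_n)$; its length is $L[f(z,x^n)]=\sum_{i=1}^n L[f(z_i,x_i)]$, where $L(\cdot)$ denotes the length of a binary string. The encoder is information lossless (IL) if for every $z\in\mathcal{Z}$ and every $n\ge1$, the map $x^n\mapsto (f(z,x^n),g(z,x^n))$ is injective on $\mathcal{X}^n$ (i.e., the initial state, the output bit string and the final state determine the input).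 The Kraft matrix of $E$ is the $s\times s$ nonnegative matrix $K$ with entries $K_{zz'}=\sum_{\{x\in\mathcal{X}:\ g(z,x)=z'\}}2^{-L[f(z,x)]}$ (an empty sum is $0$). $\rho(\cdot)$ denotes spectral radius. *)

(* Defs.v *)
(* Scalars: algC (algebraic complex numbers), which contains
   all entries of the Kraft matrix (dyadic rationals) and all its eigenvalues. *)
From HB Require Import structures.
From mathcomp Require Import all_boot all_order all_algebra all_field.
Set Implicit Arguments. Unset Strict Implicit. Unset Printing Implicit Defensive.
Import Order.TTheory GRing.Theory Num.Theory.
Local Open Scope ring_scope.

Fixpoint fs_out (X : Type) (s : nat) (f : 'I_s -> X -> seq bool)
  (g : 'I_s -> X -> 'I_s) (z : 'I_s) (xs : seq X) : seq bool :=
  match xs with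
  | [::] => [::]
  | x :: xs' => f z x ++ fs_out f g (g z x) xs'
  end.

Fixpoint fs_state (X : Type) (s : nat) (g : 'I_s -> X -> 'I_s)
  (z : 'I_s) (xs : seq X) : 'I_s :=
  match xs with
  | [::] => z
  | x :: xs' => fs_state g (g z x) xs'
  end.

Definition info_lossless (X : finType) (s : nat) (f : 'I_s -> X -> seq bool)
  (g : 'I_s -> X -> 'I_s) : Prop :=
  forall (z : 'I_s) (n : nat), (0 < n)%N ->
  forall u v : n.-tuple X,
    fs_out f g z u = fs_out f g z v ->
    fs_state g z u = fs_state g z v -> u = v.

Definition kraft_matrix (X : finType) (s : nat) (f : 'I_s -> X -> seq bool)
  (g : 'I_s -> X -> 'I_s) : 'M[algC]_s :=
  \matrix_(z, z') \sum_(x : X | g z x == z') (2%:R : algC) ^- size (f z x).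

Definition kraft_matrix_l (X : finType) (s : nat) (f : 'I_s -> X -> seq bool)
  (g : 'I_s -> X -> 'I_s) (l : nat) : 'M[algC]_s :=
  \matrix_(z, z') \sum_(t : l.-tuple X | fs_state g z t == z')
      (2%:R : algC) ^- size (fs_out f g z t).

(* Spectral radius: maximum modulus of the (complex) eigenvalues, i.e. of the
   roots of the characteristic polynomial (listed with multiplicity);
   0 for the empty matrix. *)
Definition spectral_radius (n : nat) (A : 'M[algC]_n) : algC :=
  \big[Num.max/0]_(z <- sval (closed_field_poly_normal (char_poly A))) `|z|.

(* Main.v *)
Require Import Defs.
From HB Require Import structures.
From mathcomp Require Import all_boot all_order all_algebra all_field.
From mathcomp Require Import ring zify.
Set Implicit Arguments. Unset Strict Implicit. Unset Printing Implicit Defensive.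
Import Order.TTheory GRing.Theory Num.Theory.
Local Open Scope ring_scope.

Section Enc.
Variables (X : finType) (s : nat) (f : 'I_s -> X -> seq bool) (g : 'I_s -> X -> 'I_s).

Lemma kraft_l0 : kraft_matrix_l f g 0 = 1%:M.
Proof.
apply/matrixP => z z'; rewrite !mxE.
rewrite (eq_bigr (fun _ => 1)); last first.
  by move=> t _; rewrite (tuple0 t) /= expr0 invr1.
rewrite (eq_bigl (fun _ => z == z')); last by move=> t; rewrite (tuple0 t).
case: (z =P z') => [_|ne]; last by rewrite big_pred0.
by rewrite sumr_const card_tuple expn0.
Qed.

Lemma kraft_lS l :
  kraft_matrix_l f g l.+1 = kraft_matrix f g *m kraft_matrix_l f g l.
Proof.
apply/matrixP => z z'; rewrite !mxE.
rewrite (reindex (fun p : X * l.-tuple X => [tuple of p.1 :: p.2])) /=; last first.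
  exists (fun t => (thead t, [tuple of behead t])) => [[x t] _|t _] /=.
    by congr pair; apply: val_inj.
  by rewrite [RHS]tuple_eta.
set w := fun k : nat => (2%:R : algC) ^- k.
transitivity (\sum_(x : X) \sum_(t : l.-tuple X | fs_state g (g z x) t == z')
   w (size (f z x)) * w (size (fs_out f g (g z x) t))).
  rewrite pair_big_dep /=; apply: eq_bigr => -[x t] _ /=.
  by rewrite /w size_cat exprD invfM.
under eq_bigr => y _ do rewrite !mxE mulr_suml.
rewrite (partition_big (fun x => g z x) xpredT) //=.
apply: eq_bigr => y _; apply: eq_bigr => x /eqP <-.
by rewrite mulr_sumr.
Qed.

Lemma kraft_pow l : kraft_matrix f g ^+ l = kraft_matrix_l f g l.
Proof.
elim: l => [|l IH]; first by rewrite expr0 kraft_l0.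
by rewrite exprS IH kraft_lS mulmxE.
Qed.


Definition Mx := (\max_(p : 'I_s * X) size (f p.1 p.2))%N.

Lemma size_out z (xs : seq X) : (size (fs_out f g z xs) <= size xs * Mx)%N.
Proof.
elim: xs z => [//|x xs IH] z /=; rewrite size_cat mulSn leq_add //.
have H := @leq_bigmax _ (fun p : prod (ordinal s) X => size (f p.1 p.2)) (z, x). exact H.
Qed.

Lemma IL' : info_lossless f g -> forall z n (u v : n.-tuple X),
  fs_out f g z u = fs_out f g z v -> fs_state g z u = fs_state g z v -> u = v.
Proof.
move=> IL z [|n] u v; last exact: IL.
by rewrite (tuple0 u) (tuple0 v).
Qed.

Lemma entry_bound l z z' : info_lossless f g ->
  kraft_matrix_l f g l z z' <= ((l * Mx).+1)%:R.
Proof.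
move=> IL; rewrite mxE; set N := (l * Mx)%N.
rewrite (partition_big (fun t : l.-tuple X => (inord (size (fs_out f g z t)) : 'I_N.+1)) xpredT) //=.
apply: le_trans (_ : _ <= \sum_(k < N.+1) 1) _; last by rewrite sumr_const card_ord.
apply: ler_sum => k _.
have Hs (t : l.-tuple X) : (size (fs_out f g z t) < N.+1)%N.
  by rewrite ltnS /N -{2}(size_tuple t) size_out.
set A := [pred t : l.-tuple X | (fs_state g z t == z') && (size (fs_out f g z t) == k)].
rewrite (eq_bigl (mem A)); last first.
  move=> t; rewrite !inE; congr (_ && _).
  apply/eqP/eqP => [E|E].
    by rewrite -E inordK.
  by apply: val_inj; rewrite /= inordK // -E.
rewrite (eq_bigr (fun _ => (2%:R : algC) ^- k)); last first.
  by move=> t; rewrite !inE => /andP [_ /eqP ->].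
rewrite sumr_const -[_ *+ #|A|]mulr_natr.
have cardA : (#|A| <= 2 ^ k)%N.
  pose phi (t : l.-tuple X) : k.-tuple bool := insubd (nseq_tuple k false) (fs_out f g z t).
  rewrite -(card_in_imset (f := phi)); last first.
    move=> u v; rewrite !inE => /andP [/eqP su ku] /andP [/eqP sv kv] E.
    apply: (@IL' IL z l u v); last by rewrite su sv.
    by rewrite -(insubdK (nseq_tuple k false) ku) -(insubdK (nseq_tuple k false) kv) -/(phi u) E.
  have -> : (2 ^ k = #|{:k.-tuple bool}|)%N by rewrite card_tuple card_bool.
  exact: max_card.
apply: le_trans (_ : (2%:R : algC) ^- k * (2 ^ k)%:R <= _).
  rewrite ler_wpM2l ?ler_nat // invr_ge0 exprn_ge0 // ler0n.
by rewrite natrX mulVf // expf_neq0 // pnatr_eq0.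
Qed.
End Enc.

Lemma bern (r : algC) m : 1 <= r -> 1 + m%:R * (r - 1) <= r ^+ m.
Proof.
move=> r1; elim: m => [|m IH]; first by rewrite mul0r addr0 expr0.
have r0 : 0 <= r by apply: le_trans r1; rewrite ler01.
rewrite exprSr; apply: le_trans (_ : (1 + m%:R * (r - 1)) * r <= _); last first.
  by rewrite ler_wpM2r.
rewrite -subr_ge0.
have -> : (1 + m%:R * (r - 1)) * r - (1 + m.+1%:R * (r - 1)) = m%:R * ((r - 1) * (r - 1)).
  by rewrite mulrS; ring.
by rewrite mulr_ge0 ?ler0n // mulr_ge0 // subr_ge0.
Qed.

Lemma le1_of_poly (r : algC) (D : nat) : 0 <= r ->
  (forall m, r ^+ m <= (D * m.+1)%:R) -> r <= 1.
Proof.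
move=> r0 H; have rr : r \is Num.real := ger0_real r0.
rewrite real_leNgt ?real1 //; apply/negP => r1.
set d := r - 1; have d0 : 0 < d by rewrite subr_gt0.
have dd0 : 0 < d * d by rewrite mulr_gt0.
set x := (3 * D)%:R / (d * d).
have x0 : 0 <= x by rewrite divr_ge0 ?ler0n ?ltW.
have Hb := archi_boundP x0; set N := Num.bound x in Hb.
have N0 : (0 < N)%N by rewrite -(ltr0n algC); apply: le_lt_trans Hb.
have h1 : N%:R * d <= r ^+ N.
  apply: le_trans (bern N (ltW r1)); rewrite -/d ler_wpDl // ler01.
have key : (N%:R * (d * d)) * N%:R <= (3 * D)%:R * N%:R.
  apply: le_trans (_ : r ^+ (N + N) <= _).
    rewrite exprD; have -> : N%:R * (d * d) * N%:R = (N%:R * d) * (N%:R * d) by ring.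
    by apply: ler_pM => //; rewrite mulr_ge0 ?ler0n ?ltW.
  apply: le_trans (H (N + N)) _; rewrite -natrM ler_nat; nia.
rewrite ler_pM2r ?ltr0n // in key.
have h2 : (3 * D)%:R < N%:R * (d * d).
  have e : x * (d * d) = (3 * D)%:R by rewrite /x divfK // lt0r_neq0.
  by rewrite -e ltr_pM2r.
by have := lt_le_trans h2 key; rewrite ltxx.
Qed.

Lemma sr_le1 n (A : 'M[algC]_n) (c : nat) :
  (forall m i j, `|(A ^+ m) i j| <= (c * m.+1)%:R) -> spectral_radius A <= 1.
Proof.
move=> HA; rewrite /spectral_radius; case: closed_field_poly_normal => r Hr /=.
suff Hz : forall z, z \in r -> `|z| <= 1.
  elim: r Hz {Hr} => [|a r IH] Hz; first by rewrite big_nil ler01.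
  rewrite big_cons /Order.max.
  have IH' := IH (fun z zr => Hz z (mem_behead (s := a :: r) zr)).
  by case: ifP => _ //; apply: Hz; rewrite inE eqxx.
move=> z zr.
have root_z : root (char_poly A) z.
  rewrite Hr rootE hornerZ; move: (root_prod_XsubC r z); rewrite zr rootE => /eqP ->.
  by rewrite mulr0.
move: root_z; rewrite -eigenvalue_root_char => /eigenvalueP [v Hv v0].
have Hm m : v *m A ^+ m = z ^+ m *: v.
  elim: m => [|m IH]; first by rewrite expr0 scale1r mulmx1.
  by rewrite exprSr -mulmxE mulmxA IH -scalemxAl Hv scalerA -exprSr.
set S := \sum_i `|v 0 i|.
have S0 : 0 < S.
  rewrite lt0r sumr_ge0 ?andbT //; apply/eqP => /(psumr_eq0P (fun i _ => normr_ge0 _)) H0.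
  apply/negP: v0; rewrite negbK; apply/eqP/matrixP => i j; rewrite (ord1 i) !mxE.
  by apply/normr0_eq0; apply: H0.
have bnd m : `|z| ^+ m * S <= (n * (c * m.+1))%:R * S.
  rewrite /S mulr_sumr.
  apply: le_trans (_ : \sum_j \sum_i `|v 0 i| * (c * m.+1)%:R <= _).
    apply: ler_sum => j _.
    have := congr1 (fun M : 'rV[algC]_n => M 0 j) (Hm m); rewrite !mxE => e.
    rewrite -normrX -normrM -e; apply: le_trans (ler_norm_sum _ _ _) _.
    apply: ler_sum => i _; rewrite normrM ler_wpM2l //.
  rewrite (eq_bigr (fun _ => S * (c * m.+1)%:R)); last by move=> j _; rewrite mulr_suml.
  rewrite sumr_const card_ord -mulr_natl natrM.
  rewrite -subr_ge0 (_ : _ - _ = 0) ?lexx //; rewrite /S; ring.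
apply: (@le1_of_poly _ (n * c)) => // m.
by rewrite -mulnA -(ler_pM2r S0).
Qed.

Unset Implicit Arguments.
Set Strict Implicit.

Theorem theorem1 (X : finType) (s : nat) (f : 'I_s -> X -> seq bool)
  (g : 'I_s -> X -> 'I_s) :
  info_lossless f g ->
  spectral_radius (kraft_matrix f g) <= 1 /\
  (forall l : nat, (0 < l)%N ->
     (kraft_matrix f g) ^+ l = kraft_matrix_l f g l /\
     spectral_radius ((kraft_matrix f g) ^+ l) <= 1).
Proof.
move=> IL.
have Hent m i j : `|(kraft_matrix f g ^+ m) i j| <= ((m * Mx f).+1)%:R.
  rewrite kraft_pow ger0_norm; first exact: entry_bound.
  by rewrite mxE sumr_ge0 // => t _; rewrite invr_ge0 exprn_ge0 // ler0n.
split.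
  apply: (sr_le1 (c := (Mx f).+1)) => m i j.
  apply: le_trans (Hent m i j) _; rewrite ler_nat [(_.+1 * _)%N]mulnC.
  exact: (ltn_mul (ltnSn m) (ltnSn (Mx f))).
move=> l l0; split; first exact: kraft_pow.
apply: (sr_le1 (c := (l * Mx f).+1)) => m i j; rewrite -exprM.
apply: le_trans (Hent _ i j) _; rewrite ler_nat mulnAC.
exact: (ltn_mul (ltnSn (l * Mx f)) (ltnSn m)).
Qed.
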